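(* The canonical bases $W_+M_N$ and $\hat W_-$ of solutions of (L) on $\Sigma_1$ are related by a constant matrix $Q=Q(B,A)$, $W_+(z)M_N=\hat W_-(z)Q$, and $Q^2=\mathrm{Id}$.
   Context: Let $\omega>0$, $l=B/\omega\ge0$, $\mu=A/(2\omega)>0$. System (L): $u'=z^{-2}\big(-(lz+\mu(1+z^2))u+\frac{z}{2i\omega}v\big)$, $v'=\frac{1}{2i\omega z}u$. $F(z)=\operatorname{diag}(z^{-l}e^{\mu(1/z-z)},1)$. $S_\pm$ are sectors with vertex $0$ containing the closed upper/lower half-plane minus $0$, closures avoiding $i\mathbb R_\mp$, $S_-=\overline{S_+}$ (so $z\mapsto1/z$ swaps $S_+$ and $S_-$). $H_\pm$ are the unique invertible matrix functions holomorphic on $S_\pm$, $C^\infty$ on $\overline{S_\pm}\setminus\{\infty\}$, $H_\pm(0)=\mathrm{Id}$, transforming (L) via $w=H_\pm\tilde w$ into $\tilde u'=-z^{-2}(lz+\mu(1+z^2))\tilde u$, $\tilde v'=0$. $W_+=H_+F$ on $S_+$. $\Sigma_1$ is the component of $S_+\cap S_-$ containing $\mathbb R_+$. $M_N=\operatorname{diag}(e^{-2\pi il},1)$. The transformation $\mathbb I:(u,v)(z)\mapsto -iz^{-l}e^{\mu(1/z-z)}\big(-v(z^{-1}),u(z^{-1})\big)$ maps solutions of (L) to solutions of (L) and is an involution of the solution space; $\hat W_-=\mathbb I(W_+M_N)$ is obtained by applying $\mathbb I$ to each column. *)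

(* Defs.v *)
From Stdlib Require Import Reals Lra.
Open Scope R_scope.

Definition Cx : Type := (R * R)%type.
Definition RtoC (x : R) : Cx := (x, 0).
Definition C0 : Cx := (0, 0).
Definition C1 : Cx := (1, 0).
Definition Ci : Cx := (0, 1).
Definition Cadd (a b : Cx) : Cx := (fst a + fst b, snd a + snd b).
Definition Copp (a : Cx) : Cx := (- fst a, - snd a).
Definition Csub (a b : Cx) : Cx := Cadd a (Copp b).
Definition Cmul (a b : Cx) : Cx :=
  (fst a * fst b - snd a * snd b, fst a * snd b + snd a * fst b).
Definition Cinv (a : Cx) : Cx :=
  let d := fst a * fst a + snd a * snd a in (fst a / d, - snd a / d).
Definition Cdiv (a b : Cx) : Cx := Cmul a (Cinv b).
Definition Cconj (a : Cx) : Cx := (fst a, - snd a).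
Definition Cmod (a : Cx) : R := sqrt (fst a * fst a + snd a * snd a).
Definition Cexp (a : Cx) : Cx := (exp (fst a) * cos (snd a), exp (fst a) * sin (snd a)).

(* Argument with values in (-pi/2, 3pi/2]: the branch of arg on C minus the
   closed negative imaginary half-axis, which contains the closure of S_+
   (minus 0).  Its restriction to the right half-plane is the principal arg. *)
Definition Carg (a : Cx) : R :=
  let x := fst a in let y := snd a in
  match Rlt_dec 0 x with
  | left _ => atan (y / x)
  | right _ =>
      match Rlt_dec x 0 with
      | left _ => atan (y / x) + PI
      | right _ => if Rlt_dec 0 y then PI / 2 else - (PI / 2)
      end
  end.
Definition Clog (a : Cx) : Cx := (ln (Cmod a), Carg a).
Definition Cpow (a : Cx) (s : R) : Cx := Cexp (Cmul (RtoC s) (Clog a)).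

Record M2 : Type := mkM2 { e11 : Cx; e12 : Cx; e21 : Cx; e22 : Cx }.
Definition V2 : Type := (Cx * Cx)%type.
Definition mId : M2 := mkM2 C1 C0 C0 C1.
Definition mmul (A B : M2) : M2 :=
  mkM2 (Cadd (Cmul (e11 A) (e11 B)) (Cmul (e12 A) (e21 B)))
       (Cadd (Cmul (e11 A) (e12 B)) (Cmul (e12 A) (e22 B)))
       (Cadd (Cmul (e21 A) (e11 B)) (Cmul (e22 A) (e21 B)))
       (Cadd (Cmul (e21 A) (e12 B)) (Cmul (e22 A) (e22 B))).
Definition msub (A B : M2) : M2 :=
  mkM2 (Csub (e11 A) (e11 B)) (Csub (e12 A) (e12 B))
       (Csub (e21 A) (e21 B)) (Csub (e22 A) (e22 B)).
Definition mscal (c : Cx) (A : M2) : M2 :=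
  mkM2 (Cmul c (e11 A)) (Cmul c (e12 A)) (Cmul c (e21 A)) (Cmul c (e22 A)).
Definition mdiag (a b : Cx) : M2 := mkM2 a C0 C0 b.
Definition mdet (A : M2) : Cx := Csub (Cmul (e11 A) (e22 A)) (Cmul (e12 A) (e21 A)).
Definition mnorm (A : M2) : R :=
  Cmod (e11 A) + Cmod (e12 A) + Cmod (e21 A) + Cmod (e22 A).
Definition col1 (A : M2) : V2 := (e11 A, e21 A).
Definition col2 (A : M2) : V2 := (e12 A, e22 A).
Definition of_cols (c1 c2 : V2) : M2 := mkM2 (fst c1) (fst c2) (snd c1) (snd c2).

Definition mderiv_on (f f' : Cx -> M2) (U : Cx -> Prop) : Prop :=
  forall z, U z -> forall eps, 0 < eps -> exists delta, 0 < delta /\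
    forall h, h <> C0 -> Cmod h < delta ->
      mnorm (msub (mscal (Cinv h) (msub (f (Cadd z h)) (f z))) (f' z)) < eps.

Definition mcont_on (f : Cx -> M2) (K : Cx -> Prop) : Prop :=
  forall z, K z -> forall eps, 0 < eps -> exists delta, 0 < delta /\
    forall w, K w -> Cmod (Csub w z) < delta -> mnorm (msub (f w) (f z)) < eps.

Definition mholo_on (f : Cx -> M2) (U : Cx -> Prop) : Prop :=
  exists f', mderiv_on f f' U.

(* f, holomorphic on the open set U, is C^infinity on the closed set K
   (the closure of U): all its complex derivatives on U extend
   continuously to K, and f itself is continuous on K. *)
Definition smooth_upto (f : Cx -> M2) (U K : Cx -> Prop) : Prop :=
  exists D : nat -> Cx -> M2,
    (forall z, D 0%nat z = f z) /\
    (forall n, mderiv_on (D n) (D (S n)) U) /\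
    (forall n, mcont_on (D n) K).

Definition S_plus (alpha beta : R) (z : Cx) : Prop :=
  z <> C0 /\ - alpha < Carg z < PI + beta.
(* its closure in C (= closure in the Riemann sphere minus infinity) *)
Definition S_plus_cl (alpha beta : R) (z : Cx) : Prop :=
  z = C0 \/ (z <> C0 /\ - alpha <= Carg z <= PI + beta).
Definition S_minus (alpha beta : R) (z : Cx) : Prop := S_plus alpha beta (Cconj z).

Definition path_cont (gamma : R -> Cx) : Prop :=
  forall t, 0 <= t <= 1 -> forall eps, 0 < eps -> exists delta, 0 < delta /\
    forall s, 0 <= s <= 1 -> Rabs (s - t) < delta -> Cmod (Csub (gamma s) (gamma t)) < eps.

(* Sigma_1 : the (path-)connected component of S_+ /\ S_- containing R_+
   (equivalently containing 1, since R_+ is connected and lies in S_+ /\ S_-). *)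
Definition Sigma1 (alpha beta : R) (z : Cx) : Prop :=
  exists gamma : R -> Cx, path_cont gamma /\ gamma 0 = C1 /\ gamma 1 = z /\
    forall t, 0 <= t <= 1 -> S_plus alpha beta (gamma t) /\ S_minus alpha beta (gamma t).

(* coefficient matrix of (L):  w' = L_mat z w,  w = (u,v) *)
Definition lam (l mu : R) (z : Cx) : Cx :=
  Copp (Cmul (Cinv (Cmul z z))
             (Cadd (Cmul (RtoC l) z) (Cmul (RtoC mu) (Cadd C1 (Cmul z z))))).
Definition L_mat (omega l mu : R) (z : Cx) : M2 :=
  mkM2 (lam l mu z)
       (Cmul (Cinv (Cmul z z)) (Cdiv z (Cmul (RtoC 2) (Cmul Ci (RtoC omega)))))
       (Cinv (Cmul (Cmul (RtoC 2) (Cmul Ci (RtoC omega))) z))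
       C0.
Definition Lambda_mat (l mu : R) (z : Cx) : M2 := mdiag (lam l mu z) C0.

(* H transforms (L) via w = H w~ into the reduced system:  H' = L H - H Lambda *)
Definition transforms_L (omega l mu : R) (H : Cx -> M2) (U : Cx -> Prop) : Prop :=
  exists H', mderiv_on H H' U /\
    forall z, U z -> H' z = msub (mmul (L_mat omega l mu z) (H z)) (mmul (H z) (Lambda_mat l mu z)).

Definition fexp (l mu : R) (z : Cx) : Cx :=
  Cmul (Cpow z (- l)) (Cexp (Cmul (RtoC mu) (Csub (Cinv z) z))).
Definition F_mat (l mu : R) (z : Cx) : M2 := mdiag (fexp l mu z) C1.
Definition M_N (l : R) : M2 := mdiag (Cexp (0, - (2 * PI * l))) C1.

Definition I_trans (l mu : R) (w : Cx -> V2) : Cx -> V2 :=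
  fun z => let c := Cmul (Copp Ci) (fexp l mu z) in
           (Cmul c (Copp (snd (w (Cinv z)))), Cmul c (fst (w (Cinv z)))).
Definition I_mat (l mu : R) (W : Cx -> M2) : Cx -> M2 :=
  fun z => of_cols (I_trans l mu (fun x => col1 (W x)) z)
                   (I_trans l mu (fun x => col2 (W x)) z).

(* Main.v *)
Require Import Defs.
From Stdlib Require Import Reals Lra Field.
Notation Cone := Defs.C1.
Open Scope R_scope.

Lemma Cx_eq (a b : Cx) : fst a = fst b -> snd a = snd b -> a = b.
Proof. destruct a, b; simpl; intros; subst; reflexivity. Qed.

Ltac cx := repeat match goal with a : Cx |- _ => destruct a end;
  unfold Cadd, Cmul, Copp, Csub, C0, Cone, Ci, RtoC in *; simpl;
  apply Cx_eq; simpl; ring.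

Lemma Cring : ring_theory C0 Cone Cadd Cmul Csub Copp (@eq Cx).
Proof. constructor; intros; cx. Qed.

Lemma C1_neq_C0 : Cone <> C0.
Proof. unfold Cone, C0; intro H; injection H; lra. Qed.

Lemma Cinv_l (a : Cx) : a <> C0 -> Cmul (Cinv a) a = Cone.
Proof. intro H; destruct a as [x y].
  assert (x*x+y*y <> 0).
  { intro E. apply H. assert (x = 0) by nra. assert (y = 0) by nra. subst; reflexivity. }
  unfold Cinv, Cmul, Cone; simpl; apply Cx_eq; simpl; field; auto. Qed.

Lemma Cfield : field_theory C0 Cone Cadd Cmul Csub Copp Cdiv Cinv (@eq Cx).
Proof. constructor. exact Cring. exact C1_neq_C0. reflexivity. exact Cinv_l. Qed.

Add Field CxField : Cfield.

Goal forall a b : Cx, b <> C0 -> Cmul (Cdiv a b) b = a.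
intros. field. auto. Qed.
Lemma Dplus f g x a b : derivable_pt_lim f x a -> derivable_pt_lim g x b ->
  derivable_pt_lim (fun s => f s + g s) x (a + b).
Proof. intros; apply (derivable_pt_lim_plus f g); auto. Qed.
Lemma Dminus f g x a b : derivable_pt_lim f x a -> derivable_pt_lim g x b ->
  derivable_pt_lim (fun s => f s - g s) x (a - b).
Proof. intros; apply (derivable_pt_lim_minus f g); auto. Qed.
Lemma Dmult f g x a b : derivable_pt_lim f x a -> derivable_pt_lim g x b ->
  derivable_pt_lim (fun s => f s * g s) x (a * g x + f x * b).
Proof. intros; apply (derivable_pt_lim_mult f g); auto. Qed.
Lemma Dopp f x a : derivable_pt_lim f x a -> derivable_pt_lim (fun s => - f s) x (- a).
Proof. intros; apply (derivable_pt_lim_opp f); auto. Qed.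
Lemma Dconst c x : derivable_pt_lim (fun _ => c) x 0.
Proof. apply (derivable_pt_lim_const c). Qed.
Lemma Did x : derivable_pt_lim (fun s => s) x 1.
Proof. apply derivable_pt_lim_id. Qed.
Lemma Ddiv f g x a b : derivable_pt_lim f x a -> derivable_pt_lim g x b -> g x <> 0 ->
  derivable_pt_lim (fun s => f s / g s) x ((a * g x - b * f x) / (g x)²).
Proof. intros; apply (derivable_pt_lim_div f g); auto. Qed.
Lemma Dcomp (F : R -> R) g x a b : derivable_pt_lim g x a -> derivable_pt_lim F (g x) b ->
  derivable_pt_lim (fun s => F (g s)) x (b * a).
Proof. intros; apply (derivable_pt_lim_comp g F); auto. Qed.
Lemma Dext f g x a : (forall s, f s = g s) -> derivable_pt_lim f x a -> derivable_pt_lim g x a.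
Proof. intros E H eps He; destruct (H eps He) as [d Hd]; exists d; intros h H1 H2.
  rewrite <- !E; auto. Qed.
Lemma Dval f x a b : a = b -> derivable_pt_lim f x a -> derivable_pt_lim f x b.
Proof. intros; subst; auto. Qed.
Lemma Dloc f g x a r : 0 < r -> (forall s, Rabs (s - x) < r -> f s = g s) ->
  derivable_pt_lim f x a -> derivable_pt_lim g x a.
Proof. intros Hr E H eps He; destruct (H eps He) as [d Hd].
  assert (0 < Rmin d r) by (apply Rmin_pos; [destruct d|]; auto).
  exists (mkposreal _ H0); simpl; intros h H1 H2.
  rewrite <- !E. apply Hd; auto. apply Rlt_le_trans with (1 := H2); apply Rmin_l.
  unfold Rminus; rewrite Rplus_opp_r, Rabs_R0; auto.
  replace (x + h - x) with h by ring. apply Rlt_le_trans with (1 := H2); apply Rmin_r.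
Qed.

Definition cD (f : R -> Cx) (t : R) (c : Cx) : Prop :=
  derivable_pt_lim (fun s => fst (f s)) t (fst c) /\
  derivable_pt_lim (fun s => snd (f s)) t (snd c).

Lemma cD_val f t a b : a = b -> cD f t a -> cD f t b.
Proof. intros; subst; auto. Qed.
Lemma cD_ext f g t a : (forall s, f s = g s) -> cD f t a -> cD g t a.
Proof. intros E [H1 H2]; split; eapply Dext; eauto; intro s; simpl; rewrite E; auto. Qed.
Lemma cD_loc f g t a r : 0 < r -> (forall s, Rabs (s - t) < r -> f s = g s) -> cD f t a -> cD g t a.
Proof. intros Hr E [H1 H2]; split; eapply Dloc; eauto; intros s Hs; simpl; rewrite E; auto. Qed.
Lemma cD_const c t : cD (fun _ => c) t C0.
Proof. split; apply Dconst. Qed.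
Lemma cD_add f g t a b : cD f t a -> cD g t b -> cD (fun s => Cadd (f s) (g s)) t (Cadd a b).
Proof. intros [] []; split; simpl; apply Dplus; auto. Qed.
Lemma cD_opp f t a : cD f t a -> cD (fun s => Copp (f s)) t (Copp a).
Proof. intros []; split; simpl; apply Dopp; auto. Qed.
Lemma cD_sub f g t a b : cD f t a -> cD g t b -> cD (fun s => Csub (f s) (g s)) t (Csub a b).
Proof. intros; apply cD_add; auto; apply cD_opp; auto. Qed.
Lemma cD_mul f g t a b : cD f t a -> cD g t b ->
  cD (fun s => Cmul (f s) (g s)) t (Cadd (Cmul a (g t)) (Cmul (f t) b)).
Proof. intros [] []; split; simpl.
  - eapply Dval; [|apply Dminus; apply Dmult; eauto]. unfold Cadd, Cmul; simpl; ring.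
  - eapply Dval; [|apply Dplus; apply Dmult; eauto]. unfold Cadd, Cmul; simpl; ring.
Qed.
Lemma cD_inv f t a : f t <> C0 -> cD f t a ->
  cD (fun s => Cinv (f s)) t (Copp (Cmul a (Cinv (Cmul (f t) (f t))))).
Proof. intros Hn [H1 H2].
  assert (Dd : derivable_pt_lim (fun s => fst (f s) * fst (f s) + snd (f s) * snd (f s)) t
     (fst a * fst (f t) + fst (f t) * fst a + (snd a * snd (f t) + snd (f t) * snd a))).
  { apply Dplus; apply Dmult; auto. }
  destruct (f t) as [x y] eqn:Ef.
  assert (Hd : x*x+y*y <> 0).
  { intro E. apply Hn. assert (x = 0) by nra. assert (y = 0) by nra. subst; reflexivity. }
  simpl in Dd.
  assert (Hd2 : (x*x - y*y)*(x*x-y*y) + (x*y+y*x)*(x*y+y*x) <> 0).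
  { replace ((x*x - y*y)*(x*x-y*y) + (x*y+y*x)*(x*y+y*x)) with ((x*x+y*y)*(x*x+y*y)) by ring.
    apply Rmult_integral_contrapositive; auto. }
  unfold Cinv; split; simpl.
  - eapply Dval; [|apply Ddiv; [exact H1 | exact Dd | simpl; try rewrite Ef; simpl; exact Hd]].
    simpl; rewrite Ef; unfold Copp, Cmul, Cinv; simpl. unfold Rsqr; field; split; auto.
  - eapply Dval; [|apply Ddiv; [apply Dopp; exact H2 | exact Dd | simpl; try rewrite Ef; simpl; exact Hd]].
    simpl; rewrite Ef; unfold Copp, Cmul, Cinv; simpl. unfold Rsqr; field; split; auto.
Qed.
Lemma cD_exp f t a : cD f t a -> cD (fun s => Cexp (f s)) t (Cmul (Cexp (f t)) a).
Proof. intros [H1 H2]; unfold Cexp; split; simpl.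
  - eapply Dval; [|apply Dmult; [apply Dcomp; [exact H1| apply derivable_pt_lim_exp]
                               | apply Dcomp; [exact H2| apply derivable_pt_lim_cos]]]. unfold Cmul; simpl; ring.
  - eapply Dval; [|apply Dmult; [apply Dcomp; [exact H1| apply derivable_pt_lim_exp]
                               | apply Dcomp; [exact H2| apply derivable_pt_lim_sin]]]. unfold Cmul; simpl; ring.
Qed.
Definition N (a : Cx) : R := Rabs (fst a) + Rabs (snd a).

Lemma N_ge0 a : 0 <= N a.
Proof. unfold N; pose proof (Rabs_pos (fst a)); pose proof (Rabs_pos (snd a)); lra. Qed.
Lemma Cmod_ge0 a : 0 <= Cmod a.
Proof. apply sqrt_pos. Qed.
Lemma fst_le_Cmod a : Rabs (fst a) <= Cmod a.
Proof. unfold Cmod. rewrite <- sqrt_Rsqr_abs. apply sqrt_le_1_alt. unfold Rsqr.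
  pose proof (Rle_0_sqr (snd a)); unfold Rsqr in *; lra. Qed.
Lemma snd_le_Cmod a : Rabs (snd a) <= Cmod a.
Proof. unfold Cmod. rewrite <- sqrt_Rsqr_abs. apply sqrt_le_1_alt. unfold Rsqr.
  pose proof (Rle_0_sqr (fst a)); unfold Rsqr in *; lra. Qed.
Lemma N_le_Cmod a : N a <= 2 * Cmod a.
Proof. unfold N; pose proof (fst_le_Cmod a); pose proof (snd_le_Cmod a); lra. Qed.
Lemma Cmod_le_N a : Cmod a <= N a.
Proof. unfold Cmod, N. rewrite <- (sqrt_Rsqr (Rabs (fst a) + Rabs (snd a))) by (apply N_ge0).
  apply sqrt_le_1_alt. unfold Rsqr.
  pose proof (Rabs_pos (fst a)); pose proof (Rabs_pos (snd a)).
  replace (fst a * fst a) with (Rabs (fst a) * Rabs (fst a)) by (rewrite <- Rabs_mult; apply Rabs_pos_eq; nra).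
  replace (snd a * snd a) with (Rabs (snd a) * Rabs (snd a)) by (rewrite <- Rabs_mult; apply Rabs_pos_eq; nra).
  nra. Qed.
Lemma N_add a b : N (Cadd a b) <= N a + N b.
Proof. unfold N, Cadd; simpl. pose proof (Rabs_triang (fst a) (fst b)).
  pose proof (Rabs_triang (snd a) (snd b)). lra. Qed.
Lemma N_mul a b : N (Cmul a b) <= N a * N b.
Proof. unfold N, Cmul; simpl.
  pose proof (Rabs_triang (fst a * fst b) (- (snd a * snd b))).
  pose proof (Rabs_triang (fst a * snd b) (snd a * fst b)).
  rewrite Rabs_Ropp in H. rewrite !Rabs_mult in H, H0. unfold Rminus.
  pose proof (Rabs_pos (fst a)); pose proof (Rabs_pos (snd a)).
  pose proof (Rabs_pos (fst b)); pose proof (Rabs_pos (snd b)). nra. Qed.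
Lemma N_RtoC s : N (RtoC s) = Rabs s.
Proof. unfold N, RtoC; simpl; rewrite Rabs_R0; ring. Qed.

Lemma cD_eps f t c : cD f t c -> forall eta, 0 < eta -> exists d, 0 < d /\
  forall s, s <> 0 -> Rabs s < d -> N (Csub (Cmul (RtoC (/ s)) (Csub (f (t + s)) (f t))) c) < eta.
Proof. intros [H1 H2] eta He.
  destruct (H1 (eta/2)) as [d1 Hd1]; [lra|]. destruct (H2 (eta/2)) as [d2 Hd2]; [lra|].
  exists (Rmin d1 d2); split. apply Rmin_pos; [destruct d1|destruct d2]; auto.
  intros s Hs Hsd. specialize (Hd1 s Hs (Rlt_le_trans _ _ _ Hsd (Rmin_l _ _))).
  specialize (Hd2 s Hs (Rlt_le_trans _ _ _ Hsd (Rmin_r _ _))).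
  unfold N, Csub, Cadd, Copp, Cmul, RtoC; simpl.
  replace (/ s * (fst (f (t + s)) + - fst (f t)) - 0 * (snd (f (t + s)) + - snd (f t)) + - fst c)
   with ((fst (f (t + s)) - fst (f t)) / s - fst c) by (field; auto).
  replace (/ s * (snd (f (t + s)) + - snd (f t)) + 0 * (fst (f (t + s)) + - fst (f t)) + - snd c)
   with ((snd (f (t + s)) - snd (f t)) / s - snd c) by (field; auto). lra.
Qed.

Lemma eps_cD f t c : (forall eta, 0 < eta -> exists d, 0 < d /\
  forall s, s <> 0 -> Rabs s < d -> N (Csub (Cmul (RtoC (/ s)) (Csub (f (t + s)) (f t))) c) < eta)
  -> cD f t c.
Proof. intros H; split; intros eps He; destruct (H eps He) as [d [Hd Hs]];
  exists (mkposreal d Hd); intros s H1 H2; specialize (Hs s H1 H2);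
  unfold N, Csub, Cadd, Copp, Cmul, RtoC in Hs; simpl in Hs.
  - replace ((fst (f (t + s)) - fst (f t)) / s - fst c) with
      (/ s * (fst (f (t + s)) + - fst (f t)) - 0 * (snd (f (t + s)) + - snd (f t)) + - fst c) by (field; auto).
    pose proof (Rabs_pos (/ s * (snd (f (t + s)) + - snd (f t)) + 0 * (fst (f (t + s)) + - fst (f t)) + - snd c)). lra.
  - replace ((snd (f (t + s)) - snd (f t)) / s - snd c) with
      (/ s * (snd (f (t + s)) + - snd (f t)) + 0 * (fst (f (t + s)) + - fst (f t)) + - snd c) by (field; auto).
    pose proof (Rabs_pos (/ s * (fst (f (t + s)) + - fst (f t)) - 0 * (snd (f (t + s)) + - snd (f t)) + - fst c)). lra.
Qed.

Definition cdiff (h : Cx -> Cx) (z d : Cx) : Prop :=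
  forall eps, 0 < eps -> exists delta, 0 < delta /\ forall k, k <> C0 -> Cmod k < delta ->
    Cmod (Csub (Cmul (Cinv k) (Csub (h (Cadd z k)) (h z))) d) < eps.

Lemma Cx_dec (a b : Cx) : {a = b} + {a <> b}.
Proof. destruct a as [x y], b as [u v]. destruct (Req_EM_T x u); destruct (Req_EM_T y v); subst;
  [left; auto| right; intro E; injection E; auto..]. Qed.

Lemma cD_chain h z d p t c : cdiff h z d -> p t = z -> cD p t c ->
  cD (fun s => h (p s)) t (Cmul d c).
Proof. intros Hh Ep Hp. apply eps_cD. intros eps He.
  set (eta := Rmin 1 (eps / (2 * (N d + 1)))).
  assert (Heta : 0 < eta). { apply Rmin_pos; [lra|]. pose proof (N_ge0 d).
    apply Rdiv_lt_0_compat; lra. }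
  assert (Heta1 : eta <= 1) by apply Rmin_l.
  assert (Heta2 : N d * eta <= eps / 2).
  { pose proof (N_ge0 d). assert (eta <= eps / (2 * (N d + 1))) by apply Rmin_r.
    apply Rle_trans with ((N d + 1) * (eps / (2 * (N d + 1)))); [nra|]. right; field; lra. }
  set (eps1 := eps / (4 * (N c + 1))).
  pose proof (N_ge0 c) as Nc0. pose proof (N_ge0 d) as Nd0.
  assert (He1 : 0 < eps1) by (apply Rdiv_lt_0_compat; lra).
  destruct (Hh eps1 He1) as [d1 [Hd1 Hk]].
  destruct (cD_eps _ _ _ Hp eta Heta) as [d2 [Hd2 Hq]].
  exists (Rmin d2 (d1 / (N c + 1))); split.
  { apply Rmin_pos; auto. apply Rdiv_lt_0_compat; lra. }
  intros s Hs Hsd. assert (Hs2 : Rabs s < d2) by (apply Rlt_le_trans with (1 := Hsd); apply Rmin_l).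
  assert (Hs1 : Rabs s < d1 / (N c + 1)) by (apply Rlt_le_trans with (1 := Hsd); apply Rmin_r).
  specialize (Hq s Hs Hs2). rewrite Ep in Hq.
  set (q := Cmul (RtoC (/ s)) (Csub (p (t + s)) z)) in *.
  set (k := Csub (p (t + s)) z).
  assert (Hsn : RtoC s <> C0). { unfold RtoC, C0; intro E; injection E; auto. }
  assert (Ekq : k = Cmul (RtoC s) q).
  { unfold q, k. replace (RtoC (/ s)) with (Cinv (RtoC s)). field; auto.
    unfold Cinv, RtoC; simpl; apply Cx_eq; simpl; field; auto. }
  assert (Nq : N q <= N c + eta).
  { replace q with (Cadd (Csub q c) c) by (field). pose proof (N_add (Csub q c) c). lra. }
  rewrite Ep.
  replace (Cmul (RtoC (/ s)) (Csub (h (p (t + s))) (h z))) with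
    (Cmul (RtoC (/ s)) (Csub (h (Cadd z k)) (h z))) by (f_equal; f_equal; f_equal; unfold k; field).
  destruct (Cx_dec k C0) as [Ek | Ek].
  - rewrite Ek. replace (Cadd z C0) with z by field.
    replace (Csub (Cmul (RtoC (/ s)) (Csub (h z) (h z))) (Cmul d c)) with
      (Cadd (Cmul d (Csub q c)) (Copp (Cmul d q))) by (field).
    replace (Cmul d q) with C0.
    2:{ rewrite Ekq in Ek. symmetry. apply (f_equal (Cmul (Cmul d (Cinv (RtoC s))))) in Ek.
        revert Ek. intro Ek. transitivity (Cmul (Cmul d (Cinv (RtoC s))) (Cmul (RtoC s) q)).
        field; auto. rewrite Ek. field; auto. }
    replace (Copp C0) with C0 by field. replace (Cadd (Cmul d (Csub q c)) C0) with (Cmul d (Csub q c)) by field.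
    pose proof (N_mul d (Csub q c)). pose proof (N_ge0 (Csub q c)). nra.
  - set (e := Csub (Cmul (Cinv k) (Csub (h (Cadd z k)) (h z))) d).
    assert (Hck : Cmod k < d1).
    { apply Rle_lt_trans with (N k). apply Cmod_le_N. rewrite Ekq.
      apply Rle_lt_trans with (N (RtoC s) * N q). apply N_mul. rewrite N_RtoC.
      apply Rle_lt_trans with (Rabs s * (N c + 1)). pose proof (Rabs_pos s). nra.
      apply Rmult_lt_reg_r with (/ (N c + 1)). apply Rinv_0_lt_compat; lra.
      replace (Rabs s * (N c + 1) * / (N c + 1)) with (Rabs s) by (field; lra). exact Hs1. }
    specialize (Hk k Ek Hck). fold e in Hk.
    replace (Csub (Cmul (RtoC (/ s)) (Csub (h (Cadd z k)) (h z))) (Cmul d c)) with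
      (Cadd (Cmul d (Csub q c)) (Cmul e q)).
    2:{ unfold e. assert (qn : q <> C0). { intro E; apply Ek; rewrite Ekq, E; field. }
        rewrite Ekq. replace (RtoC (/ s)) with (Cinv (RtoC s)).
        field. split; auto.
        unfold Cinv, RtoC; simpl; apply Cx_eq; simpl; field; auto. }
    pose proof (N_add (Cmul d (Csub q c)) (Cmul e q)).
    pose proof (N_mul d (Csub q c)). pose proof (N_mul e q).
    pose proof (N_le_Cmod e). pose proof (N_ge0 (Csub q c)). pose proof (N_ge0 e). pose proof (N_ge0 q).
    assert (N e * N q <= 2 * eps1 * (N c + 1)).
    { apply Rmult_le_compat; auto; lra. }
    assert (2 * eps1 * (N c + 1) = eps / 2) by (unfold eps1; field; lra).
    nra.
Qed.
Lemma M2_eq (A B : M2) : e11 A = e11 B -> e12 A = e12 B -> e21 A = e21 B -> e22 A = e22 B -> A = B.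
Proof. destruct A, B; simpl; intros; subst; reflexivity. Qed.
Ltac meq := apply M2_eq; simpl.
Ltac spl4 := split; [|split; [|split]].

Definition madd (A B : M2) : M2 :=
  mkM2 (Cadd (e11 A) (e11 B)) (Cadd (e12 A) (e12 B)) (Cadd (e21 A) (e21 B)) (Cadd (e22 A) (e22 B)).
Definition mzero : M2 := mkM2 C0 C0 C0 C0.
Definition adj (A : M2) : M2 := mkM2 (e22 A) (Copp (e12 A)) (Copp (e21 A)) (e11 A).
Definition minv (A : M2) : M2 := mscal (Cinv (mdet A)) (adj A).

Definition mD (F : R -> M2) (t : R) (A : M2) : Prop :=
  cD (fun s => e11 (F s)) t (e11 A) /\ cD (fun s => e12 (F s)) t (e12 A) /\
  cD (fun s => e21 (F s)) t (e21 A) /\ cD (fun s => e22 (F s)) t (e22 A).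

Lemma mD_val F t A B : A = B -> mD F t A -> mD F t B.
Proof. intros; subst; auto. Qed.
Lemma mD_ext F G t A : (forall s, F s = G s) -> mD F t A -> mD G t A.
Proof. intros E (H1&H2&H3&H4); spl4; eapply cD_ext; eauto; intro s; simpl; rewrite E; auto. Qed.
Lemma mD_loc F G t A r : 0 < r -> (forall s, Rabs (s - t) < r -> F s = G s) -> mD F t A -> mD G t A.
Proof. intros Hr E (H1&H2&H3&H4); spl4; eapply cD_loc; eauto; intros s Hs; simpl; rewrite E; auto. Qed.
Lemma mD_const A t : mD (fun _ => A) t mzero.
Proof. spl4; apply cD_const. Qed.
Lemma mD_mul F G t A B : mD F t A -> mD G t B ->
  mD (fun s => mmul (F s) (G s)) t (madd (mmul A (G t)) (mmul (F t) B)).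
Proof. intros (A1&A2&A3&A4) (B1&B2&B3&B4).
  spl4; cbn [e11 e12 e21 e22 mmul madd mscal adj]; (eapply cD_val; [|apply cD_add; apply cD_mul; eauto]); cbv beta; ring.
Qed.
Lemma mD_scal c F t a A : cD c t a -> mD F t A ->
  mD (fun s => mscal (c s) (F s)) t (madd (mscal a (F t)) (mscal (c t) A)).
Proof. intros Hc (A1&A2&A3&A4).
  spl4; cbn [e11 e12 e21 e22 mmul madd mscal adj]; (eapply cD_val; [|apply cD_mul; eauto]); cbv beta; ring.
Qed.
Lemma cD_det F t A : mD F t A ->
  cD (fun s => mdet (F s)) t (Csub (Cadd (Cmul (e11 A) (e22 (F t))) (Cmul (e11 (F t)) (e22 A)))
                                   (Cadd (Cmul (e12 A) (e21 (F t))) (Cmul (e12 (F t)) (e21 A)))).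
Proof. intros (A1&A2&A3&A4). unfold mdet. apply cD_sub; apply cD_mul; auto. Qed.
Lemma mD_adj F t A : mD F t A -> mD (fun s => adj (F s)) t (adj A).
Proof. intros (A1&A2&A3&A4); spl4; cbn [e11 e12 e21 e22 mmul madd mscal adj]; auto; apply cD_opp; auto. Qed.

Lemma cdiff_of_mderiv f f' U z : mderiv_on f f' U -> U z ->
  cdiff (fun w => e11 (f w)) z (e11 (f' z)) /\ cdiff (fun w => e12 (f w)) z (e12 (f' z)) /\
  cdiff (fun w => e21 (f w)) z (e21 (f' z)) /\ cdiff (fun w => e22 (f w)) z (e22 (f' z)).
Proof. intros Hd Hz.
  spl4; intros eps He; destruct (Hd z Hz eps He) as [d [Hd0 Hk]]; exists d; split; auto;
  intros k Hk0 Hkd; specialize (Hk k Hk0 Hkd); unfold mnorm in Hk;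
  cbn [e11 e12 e21 e22 msub mscal] in Hk; cbv beta;
  match type of Hk with Cmod ?a + Cmod ?b + Cmod ?c + Cmod ?d < _ =>
    pose proof (Cmod_ge0 a); pose proof (Cmod_ge0 b); pose proof (Cmod_ge0 c); pose proof (Cmod_ge0 d) end;
  lra.
Qed.
Lemma mD_chain H H' U z p t c : mderiv_on H H' U -> U z -> p t = z -> cD p t c ->
  mD (fun s => H (p s)) t (mscal c (H' z)).
Proof. intros Hd Hz Ep Hp. destruct (cdiff_of_mderiv _ _ _ _ Hd Hz) as (D1&D2&D3&D4).
  spl4; cbn [e11 e12 e21 e22 mscal];
  (eapply cD_val; [|eapply (cD_chain (fun w => _ (H w))); eauto]); cbv beta; ring.
Qed.

Lemma Carg_pos w : 0 < fst w -> Carg w = atan (snd w / fst w).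
Proof. intros H; unfold Carg; destruct (Rlt_dec 0 (fst w)); [auto|lra]. Qed.

Lemma pos_near f t a : derivable_pt_lim f t a -> 0 < f t ->
  exists r, 0 < r /\ forall s, Rabs (s - t) < r -> 0 < f s.
Proof. intros Hd Hp.
  assert (Hc : continuity_pt f t) by (apply derivable_continuous_pt; exists a; auto).
  destruct (Hc (f t) Hp) as [d [Hd0 Hd1]]. exists d; split; auto. intros s Hs.
  destruct (Req_dec s t). subst; auto.
  assert (R_dist (f s) (f t) < f t). { apply Hd1; split; [split; [exact I | auto] | exact Hs]. }
  unfold R_dist in H0. apply Rabs_def2 in H0. lra.
Qed.

Lemma cD_log g t g' : cD g t g' -> 0 < fst (g t) ->
  cD (fun s => (ln (Cmod (g s)), atan (snd (g s) / fst (g s)))) t (Cmul g' (Cinv (g t))).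
Proof. intros [H1 H2] Hx. unfold Cmod. 
  assert (HS : 0 < fst (g t) * fst (g t) + snd (g t) * snd (g t)) by nra.
  assert (Hsq : 0 < sqrt (fst (g t) * fst (g t) + snd (g t) * snd (g t))) by (apply sqrt_lt_R0; auto).
  assert (DS : derivable_pt_lim (fun s => fst (g s) * fst (g s) + snd (g s) * snd (g s)) t
     (fst g' * fst (g t) + fst (g t) * fst g' + (snd g' * snd (g t) + snd (g t) * snd g'))).
  { apply Dplus; apply Dmult; auto. }
  split; cbn [fst snd].
  - eapply Dval; [|apply (Dcomp ln); [apply (Dcomp sqrt); [exact DS| apply derivable_pt_lim_sqrt; auto]
                   | apply derivable_pt_lim_ln; auto]].
    unfold Cmul, Cinv; cbn [fst snd]. set (S := fst (g t) * fst (g t) + snd (g t) * snd (g t)) in *.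
    assert (sqrt S * sqrt S = S) by (apply sqrt_sqrt; lra).
    field_simplify_eq; [|split; lra]. replace (sqrt S ^ 2) with S by (simpl; lra). unfold S; ring.
  - eapply Dval; [|apply (Dcomp atan); [apply Ddiv; [exact H2| exact H1| lra] | apply derivable_pt_lim_atan]].
    unfold Cmul, Cinv, Rsqr; cbn [fst snd]. field. split; lra.
Qed.
Lemma Cexp_add a b : Cexp (Cadd a b) = Cmul (Cexp a) (Cexp b).
Proof. destruct a as [x y], b as [u v]; unfold Cexp, Cadd, Cmul; cbn [fst snd].
  rewrite exp_plus, cos_plus, sin_plus. apply Cx_eq; cbn [fst snd]; ring. Qed.
Lemma RtoC_opp x : RtoC (- x) = Copp (RtoC x).
Proof. unfold RtoC, Copp; cbn [fst snd]; apply Cx_eq; cbn [fst snd]; ring. Qed.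
Lemma Cexp_nz a : Cexp a <> C0.
Proof. unfold Cexp, C0; intro E; injection E; intros E2 E1.
  pose proof (exp_pos (fst a)). pose proof (sin2_cos2 (snd a)). unfold Rsqr in *.
  assert (cos (snd a) = 0) by (apply Rmult_integral in E1; destruct E1; [lra|auto]).
  assert (sin (snd a) = 0) by (apply Rmult_integral in E2; destruct E2; [lra|auto]).
  rewrite H1, H2 in H0; lra. Qed.
Lemma pos_nz w : 0 < fst w -> w <> C0.
Proof. intros H E; subst; unfold C0 in H; simpl in H; lra. Qed.

Lemma cD_fexp l mu g t g' : cD g t g' -> 0 < fst (g t) ->
  cD (fun s => fexp l mu (g s)) t (Cmul (Cmul (lam l mu (g t)) (fexp l mu (g t))) g').
Proof.
  intros Hg Hx.
  destruct (pos_near _ _ _ (proj1 Hg) Hx) as [r [Hr Hnear]].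
  set (Lg := fun s => (ln (Cmod (g s)), atan (snd (g s) / fst (g s)))).
  set (E := fun s => Cadd (Cmul (RtoC (-l)) (Lg s)) (Cmul (RtoC mu) (Csub (Cinv (g s)) (g s)))).
  assert (Eq : forall s, Rabs (s - t) < r -> Cexp (E s) = fexp l mu (g s)).
  { intros s Hs. specialize (Hnear s Hs). unfold E, fexp, Cpow, Clog. rewrite Cexp_add.
    unfold Lg. rewrite Carg_pos; auto. }
  apply cD_loc with (f := fun s => Cexp (E s)) (r := r); auto.
  assert (gn : g t <> C0) by (apply pos_nz; auto).
  eapply cD_val; [| apply cD_exp; unfold E; apply cD_add;
    [apply cD_mul; [apply cD_const| apply cD_log; eauto]
    | apply cD_mul; [apply cD_const | apply cD_sub; [apply cD_inv; eauto | eauto]]]].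
  rewrite Eq by (rewrite Rminus_diag_eq, Rabs_R0; auto).
  unfold lam. rewrite RtoC_opp. field. auto.
Qed.
Definition Wf (Hp : Cx -> M2) l mu z := mmul (mmul (Hp z) (F_mat l mu z)) (M_N l).

Lemma mD_F l mu g t g' : cD g t g' -> 0 < fst (g t) ->
  mD (fun s => F_mat l mu (g s)) t (mdiag (Cmul (Cmul (lam l mu (g t)) (fexp l mu (g t))) g') C0).
Proof. intros. spl4; cbn [e11 e12 e21 e22 F_mat mdiag]; try apply cD_const. apply cD_fexp; auto. Qed.

Lemma mD_W omega l mu Hp H' U g t g' :
  mderiv_on Hp H' U -> U (g t) ->
  H' (g t) = msub (mmul (L_mat omega l mu (g t)) (Hp (g t))) (mmul (Hp (g t)) (Lambda_mat l mu (g t))) ->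
  cD g t g' -> 0 < fst (g t) ->
  mD (fun s => Wf Hp l mu (g s)) t (mscal g' (mmul (L_mat omega l mu (g t)) (Wf Hp l mu (g t)))).
Proof. intros Hd HU HH Hg Hx. unfold Wf.
  eapply mD_val; [| apply mD_mul; [apply mD_mul; [eapply mD_chain; eauto | apply mD_F; eauto] | apply mD_const]].
  rewrite HH. unfold L_mat, Lambda_mat, F_mat, M_N, mdiag. meq; ring.
Qed.
Definition Jm : M2 := mkM2 C0 (Copp Cone) Cone C0.
Ltac meq2 := apply M2_eq; cbn [e11 e12 e21 e22 mmul madd mscal msub mdiag L_mat Lambda_mat Jm mzero adj minv].

Lemma Y_form l mu W z : I_mat l mu W z = mscal (Cmul (Copp Ci) (fexp l mu z)) (mmul Jm (W (Cinv z))).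
Proof. unfold I_mat, I_trans, of_cols, col1, col2. meq2; cbn [fst snd]; ring. Qed.

Lemma cD_line a b t : cD (fun s => Cadd a (Cmul (RtoC s) b)) t b.
Proof. unfold Cadd, Cmul, RtoC; split; cbn [fst snd].
  - eapply Dval; [|apply Dplus; [apply Dconst| apply Dminus; [apply Dmult; [apply Did|apply Dconst]
       | apply Dmult; apply Dconst]]]. cbv beta; ring.
  - eapply Dval; [|apply Dplus; [apply Dconst| apply Dplus; [apply Dmult; [apply Did|apply Dconst]
       | apply Dmult; apply Dconst]]]. cbv beta; ring.
Qed.

Lemma Ci_nz : Ci <> C0. Proof. unfold Ci, C0; intro E; injection E; lra. Qed.
Lemma RtoC_nz x : x <> 0 -> RtoC x <> C0. Proof. unfold RtoC, C0; intros H E; injection E; auto. Qed.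

Lemma mD_Y omega l mu Hp H' U p t p' :
  omega <> 0 ->
  mderiv_on Hp H' U -> U (Cinv (p t)) ->
  H' (Cinv (p t)) = msub (mmul (L_mat omega l mu (Cinv (p t))) (Hp (Cinv (p t))))
                         (mmul (Hp (Cinv (p t))) (Lambda_mat l mu (Cinv (p t)))) ->
  cD p t p' -> 0 < fst (p t) -> 0 < fst (Cinv (p t)) ->
  mD (fun s => I_mat l mu (Wf Hp l mu) (p s)) t
     (mscal p' (mmul (L_mat omega l mu (p t)) (I_mat l mu (Wf Hp l mu) (p t)))).
Proof. intros Hom Hd HU HH Hpp Hx Hqx.
  assert (pn : p t <> C0) by (apply pos_nz; auto).
  eapply mD_ext. intro s; symmetry; apply Y_form. rewrite Y_form.
  eapply mD_val; [| apply mD_scal; [apply cD_mul; [apply cD_const | apply cD_fexp; eauto]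
     | apply mD_mul; [apply mD_const | apply (mD_W omega l mu Hp H' U (fun s => Cinv (p s))); auto;
                                        apply cD_inv; [auto | exact Hpp] ]]].
  pose proof Ci_nz. pose proof (RtoC_nz omega Hom). pose proof (RtoC_nz 2 ltac:(lra)).
  meq2; unfold lam, Cdiv; field; repeat split; auto; exact C1_neq_C0.
Qed.
Lemma mD_G X Z t c A : mD X t (mscal c (mmul A (X t))) -> mD Z t (mscal c (mmul A (Z t))) ->
  mdet (X t) <> C0 -> mD (fun s => mmul (minv (X s)) (Z s)) t mzero.
Proof. intros HX HZ Hn. unfold minv.
  eapply mD_val; [| apply mD_mul; [apply mD_scal; [apply cD_inv; [auto| apply cD_det; exact HX] | apply mD_adj; exact HX] | exact HZ]].
  unfold mdet in *. meq2; field; auto.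
Qed.

Lemma const01 (phi : R -> R) : (forall t, 0 <= t <= 1 -> derivable_pt_lim phi t 0) -> phi 1 = phi 0.
Proof. intros H.
  assert (pr : forall x, 0 < x < 1 -> derivable_pt phi x).
  { intros x Hx; exists 0; apply H; lra. }
  assert (Hc : forall x, 0 <= x <= 1 -> continuity_pt phi x).
  { intros x Hx; apply derivable_continuous_pt; exists 0; apply H; auto. }
  assert (Hd : forall x (P : 0 < x < 1), derive_pt phi x (pr x P) = 0).
  { intros x P. apply derive_pt_eq_0. apply H; lra. }
  pose proof (null_derivative_loc phi 0 1 pr Hc Hd) as K. apply K. lra.
Qed.

Lemma mconst (G : R -> M2) : (forall t, 0 <= t <= 1 -> mD G t mzero) -> G 1 = G 0.
Proof. intros H.
  apply M2_eq; apply Cx_eq; apply (const01 (fun s => _ (_ (G s)))); intros t Ht;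
  destruct (H t Ht) as (A1&A2&A3&A4);
  [destruct A1 as [B _]|destruct A1 as [_ B]|destruct A2 as [B _]|destruct A2 as [_ B]
  |destruct A3 as [B _]|destruct A3 as [_ B]|destruct A4 as [B _]|destruct A4 as [_ B]]; exact B.
Qed.
Definition Ucone (a : R) (w : Cx) : Prop := 0 < fst w /\ Rabs (snd w) < tan a * fst w.

Lemma atan_lt_iff a u : 0 < a < PI / 2 -> (atan u < a <-> u < tan a).
Proof. intros Ha. assert (E : atan (tan a) = a) by (apply atan_tan; lra). split; intro H.
  - destruct (Rlt_or_le u (tan a)) as [|Hle]; auto. exfalso.
    destruct (Rle_lt_or_eq_dec _ _ Hle) as [Hl|He].
    + apply atan_increasing in Hl; lra.
    + rewrite <- He in H; lra.
  - apply atan_increasing in H; lra.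
Qed.

Lemma Ucone_Carg a w : 0 < a < PI / 2 -> Ucone a w -> - a < Carg w < a.
Proof. intros Ha [Hx Hy]. rewrite Carg_pos by auto.
  assert (Hb : Rabs (snd w / fst w) < tan a).
  { unfold Rdiv; rewrite Rabs_mult, Rabs_inv, (Rabs_pos_eq (fst w)) by lra.
    apply Rmult_lt_reg_r with (fst w); auto. rewrite Rmult_assoc, Rinv_l by lra. lra. }
  apply Rabs_def2 in Hb. split.
  - assert (atan (- (snd w / fst w)) < a) by (apply atan_lt_iff; lra). rewrite atan_opp in H; lra.
  - apply atan_lt_iff; lra.
Qed.

Lemma Ucone_Splus a b w : 0 < a < PI / 2 -> 0 < b -> Ucone a w -> S_plus a b w.
Proof. intros Ha Hb HU. pose proof (Ucone_Carg a w Ha HU). pose proof PI_RGT_0.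
  split; [apply pos_nz; apply HU | lra]. Qed.

Lemma Ucone_inv a w : 0 < a < PI / 2 -> Ucone a w -> Ucone a (Cinv w).
Proof. intros Ha [Hx Hy]. unfold Ucone, Cinv; cbv zeta; cbn [fst snd].
  set (d := fst w * fst w + snd w * snd w). assert (Hd : 0 < d) by (unfold d; nra).
  split. apply Rdiv_lt_0_compat; auto.
  unfold Rdiv. rewrite Rabs_mult, Rabs_Ropp, Rabs_inv, (Rabs_pos_eq d) by lra.
  assert (0 < / d) by (apply Rinv_0_lt_compat; auto). nra.
Qed.

Lemma Ucone_line a z t : 0 < a < PI / 2 -> Ucone a z -> 0 <= t <= 1 ->
  Ucone a (Cadd Cone (Cmul (RtoC t) (Csub z Cone))).
Proof. intros Ha [Hx Hy] Ht. pose proof (tan_gt_0 a (proj1 Ha) (proj2 Ha)).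
  unfold Ucone, Cadd, Cmul, RtoC, Csub, Copp, Cadd, Defs.C1; simpl.
  assert (0 <= t * fst z) by (apply Rmult_le_pos; lra). split. nra.
  match goal with |- Rabs ?e < _ => replace e with (t * snd z) by ring end.
  rewrite Rabs_mult, (Rabs_pos_eq t) by lra.
  assert (0 <= tan a * (1 - t)) by (apply Rmult_le_pos; lra).
  destruct (Req_dec t 0) as [->|Ht0].
  - pose proof (Rabs_pos (snd z)). ring_simplify. lra.
  - assert (t * Rabs (snd z) < t * (tan a * fst z)) by (apply Rmult_lt_compat_l; lra).
    ring_simplify. nra.
Qed.

Lemma loc_const01 (h : R -> bool) :
  (forall t, 0 <= t <= 1 -> exists d, 0 < d /\ forall s, 0 <= s <= 1 -> Rabs (s - t) < d -> h s = h t) ->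
  forall t, 0 <= t <= 1 -> h t = h 0.
Proof. intros Hl.
  set (E := fun x => 0 <= x <= 1 /\ forall s, 0 <= s <= x -> h s = h 0).
  assert (Eb : bound E) by (exists 1; intros x [Hx _]; lra).
  assert (E0 : E 0) by (split; [lra| intros s Hs; replace s with 0 by lra; auto]).
  destruct (completeness E Eb (ex_intro _ 0 E0)) as [m [Hub Hlub]].
  assert (Hm0 : 0 <= m) by (apply Hub; auto).
  assert (Hm1 : m <= 1) by (apply Hlub; intros x [Hx _]; lra).
  destruct (Hl m (conj Hm0 Hm1)) as [d [Hd Hloc]].
  assert (Hx : exists x, E x /\ m - d < x).
  { apply Classical_Prop.NNPP; intro Hn.
    assert (m <= m - d). { apply Hlub. intros x Ex. apply Rnot_lt_le. intro Hlt. apply Hn; eauto. }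
    lra. }
  destruct Hx as [x [[Hx1 Hx2] Hxm]]. assert (Hxm' : x <= m) by (apply Hub; split; auto).
  set (y := Rmin (m + d / 2) 1).
  assert (Ey : forall s, 0 <= s <= y -> h s = h 0).
  { intros s Hs. unfold y in Hs. assert (s <= 1) by (pose proof (Rmin_r (m + d/2) 1); lra).
    assert (s <= m + d / 2) by (pose proof (Rmin_l (m + d/2) 1); lra).
    destruct (Rle_or_lt s x) as [Hsx|Hsx]. apply Hx2; lra.
    rewrite Hloc by (try split; try lra; apply Rabs_def1; lra).
    rewrite <- (Hloc x) by (try split; try lra; apply Rabs_def1; lra). apply Hx2; lra. }
  assert (Hy : y <= m). { apply Hub. split. split. unfold y; apply Rmin_glb; lra. unfold y; apply Rmin_r. exact Ey. }
  assert (Hy1 : y = 1). { unfold y, Rmin in *. destruct (Rle_dec (m + d/2) 1); lra. }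
  intros t Ht. apply Ey; lra.
Qed.

Lemma S_both_x_nz a b z : 0 < a < PI / 2 -> S_plus a b z -> S_minus a b z -> fst z <> 0.
Proof. intros Ha [Hz [H1 H2]] [_ [H3 H4]] Hx. destruct z as [x y]; cbn [fst] in Hx; subst x.
  unfold Carg, Cconj in *; cbn [fst snd] in *.
  destruct (Rlt_dec 0 0); [lra|]. destruct (Rlt_dec 0 0); [lra|].
  destruct (Rlt_dec 0 y); destruct (Rlt_dec 0 (- y)); try lra.
Qed.

Lemma Sigma1_cone a b z : 0 < a < PI / 2 -> 0 < b -> Sigma1 a b z -> Ucone a z.
Proof. intros Ha Hb [g [Hc [H0 [H1 HS]]]].
  set (h := fun t => if Rlt_dec 0 (fst (g t)) then true else false).
  assert (Hh : forall t, 0 <= t <= 1 -> h t = h 0).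
  { apply loc_const01. intros t Ht. destruct (HS t Ht) as [Sp Sm].
    pose proof (S_both_x_nz a b _ Ha Sp Sm) as Hnz.
    assert (He : 0 < Rabs (fst (g t))) by (apply Rabs_pos_lt; auto).
    destruct (Hc t Ht _ He) as [d [Hd Hd2]]. exists d; split; auto. intros s Hs Hsd.
    specialize (Hd2 s Hs Hsd). pose proof (fst_le_Cmod (Csub (g s) (g t))) as Hf.
    unfold Csub, Cadd, Copp in Hf, Hd2; cbn [fst snd] in Hf, Hd2.
    unfold h. destruct (Rlt_dec 0 (fst (g s))); destruct (Rlt_dec 0 (fst (g t))); auto; exfalso.
    - assert (fst (g t) < 0) by lra. rewrite Rabs_left in Hd2 by auto.
      assert (K : Rabs (fst (g s) + - fst (g t)) < - fst (g t)) by lra. apply Rabs_def2 in K. lra.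
    - assert (K : Rabs (fst (g s) + - fst (g t)) < Rabs (fst (g t))) by lra.
      rewrite (Rabs_pos_eq (fst (g t))) in K by lra. apply Rabs_def2 in K. lra. }
  assert (Hpos : 0 < fst z).
  { specialize (Hh 1 ltac:(lra)). unfold h in Hh. rewrite H1, H0 in Hh.
    cbn [fst Defs.C1] in Hh. destruct (Rlt_dec 0 1); [|lra]. destruct (Rlt_dec 0 (fst z)); auto; discriminate. }
  destruct (HS 1 ltac:(lra)) as [[_ [Hp1 _]] [_ [Hm1 _]]]. rewrite H1 in Hp1, Hm1.
  rewrite Carg_pos in Hp1 by auto. rewrite Carg_pos in Hm1 by (unfold Cconj; cbn [fst]; auto).
  unfold Cconj in Hm1; cbn [fst snd] in Hm1.
  replace (- snd z / fst z) with (- (snd z / fst z)) in Hm1 by (field; lra). rewrite atan_opp in Hm1.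
  assert (A1 : snd z / fst z < tan a) by (apply atan_lt_iff; lra).
  assert (A2 : - (snd z / fst z) < tan a) by (apply atan_lt_iff; auto; rewrite atan_opp; lra).
  split; auto. replace (snd z) with ((snd z / fst z) * fst z) by (field; lra).
  apply Rabs_def1; nra.
Qed.
Lemma Cmul_nz a b : a <> C0 -> b <> C0 -> Cmul a b <> C0.
Proof. intros Ha Hb E. apply Hb. transitivity (Cmul (Cinv a) (Cmul a b)). field; auto. rewrite E; field; auto. Qed.
Lemma mdet_mul A B : mdet (mmul A B) = Cmul (mdet A) (mdet B).
Proof. unfold mdet; cbn [mmul e11 e12 e21 e22]; ring. Qed.
Lemma mdet_scal c A : mdet (mscal c A) = Cmul (Cmul c c) (mdet A).
Proof. unfold mdet; cbn [mscal e11 e12 e21 e22]; ring. Qed.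
Lemma fexp_nz l mu w : fexp l mu w <> C0.
Proof. unfold fexp, Cpow. apply Cmul_nz; apply Cexp_nz. Qed.
Lemma detW Hp l mu w : mdet (Hp w) <> C0 -> mdet (Wf Hp l mu w) <> C0.
Proof. intros H. unfold Wf. rewrite !mdet_mul. apply Cmul_nz; [apply Cmul_nz; auto|].
  - unfold F_mat, mdiag, mdet; cbn [e11 e12 e21 e22]. replace (Csub (Cmul (fexp l mu w) Cone) (Cmul C0 C0)) with (fexp l mu w) by ring. apply fexp_nz.
  - unfold M_N, mdiag, mdet; cbn [e11 e12 e21 e22]. replace (Csub (Cmul (Cexp (0, - (2 * PI * l))) Cone) (Cmul C0 C0)) with (Cexp (0, - (2 * PI * l))) by ring. apply Cexp_nz.
Qed.
Lemma detY Hp l mu w : mdet (Hp (Cinv w)) <> C0 -> mdet (I_mat l mu (Wf Hp l mu) w) <> C0.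
Proof. intros H. rewrite Y_form, mdet_scal, mdet_mul.
  assert (Hc : Cmul (Copp Ci) (fexp l mu w) <> C0).
  { apply Cmul_nz; [|apply fexp_nz]. intro E; apply Ci_nz; transitivity (Copp (Copp Ci)); [ring| rewrite E; ring]. }
  apply Cmul_nz; [apply Cmul_nz; auto|].
  apply Cmul_nz. unfold Jm, mdet; cbn [e11 e12 e21 e22].
  replace (Csub (Cmul C0 C0) (Cmul (Copp Cone) Cone)) with Cone by ring. exact C1_neq_C0.
  apply detW; auto.
Qed.
Lemma minv_r A B : mdet A <> C0 -> mmul A (mmul (minv A) B) = B.
Proof. intros H; unfold minv, mdet in *; meq2; field; auto. Qed.
Lemma minv_l A : mdet A <> C0 -> mmul (minv A) A = mId.
Proof. intros H; unfold minv, mdet, mId in *; meq2; field; auto. Qed.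
Lemma mmul_assoc A B C : mmul (mmul A B) C = mmul A (mmul B C).
Proof. meq2; ring. Qed.
Lemma Cinv_one : Cinv Cone = Cone.
Proof. unfold Cinv, Defs.C1; cbv zeta; cbn [fst snd]. apply Cx_eq; cbn [fst snd]; field. Qed.
Lemma fexp_one l mu : fexp l mu Cone = Cone.
Proof. unfold fexp, Cpow, Clog.
  assert (E1 : Cmod Cone = 1) by (unfold Cmod, Defs.C1; cbn [fst snd]; replace (1*1+0*0) with 1 by ring; apply sqrt_1).
  assert (E2 : Carg Cone = 0) by (rewrite Carg_pos; unfold Defs.C1; cbn [fst snd]; [replace (0/1) with 0 by field; apply atan_0 | lra]).
  rewrite E1, E2, ln_1, Cinv_one. unfold Cexp, Cmul, Csub, Cadd, Copp, RtoC, Defs.C1; cbn [fst snd].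
  apply Cx_eq; cbn [fst snd]; rewrite ?Rmult_0_r, ?Rmult_0_l, ?Rminus_0_r, ?Rplus_0_r, ?Rplus_opp_r, ?Rmult_0_r, ?Rminus_0_r, ?exp_0, ?cos_0, ?sin_0;
  ring_simplify; rewrite ?exp_0, ?cos_0, ?sin_0; ring.
Qed.
Theorem mainTheorem6 (omega A B alpha beta : R) (Hp : Cx -> M2) :
  0 < omega -> 0 <= B -> 0 < A ->
  0 < alpha < PI / 2 -> 0 < beta < PI / 2 ->
  mholo_on Hp (S_plus alpha beta) ->
  smooth_upto Hp (S_plus alpha beta) (S_plus_cl alpha beta) ->
  (forall z, S_plus_cl alpha beta z -> mdet (Hp z) <> C0) ->
  Hp C0 = mId ->
  transforms_L omega (B / omega) (A / (2 * omega)) Hp (S_plus alpha beta) ->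
  let l := B / omega in
  let mu := A / (2 * omega) in
  let Wp := fun z => mmul (Hp z) (F_mat l mu z) in
  let WpMN := fun z => mmul (Wp z) (M_N l) in
  let What_m := I_mat l mu WpMN in
  exists Q : M2,
    (forall z, Sigma1 alpha beta z -> WpMN z = mmul (What_m z) Q) /\
    mmul Q Q = mId.
Proof.
  intros Hom HB HA Ha Hb _ _ Hdet _ [H' [Hd Heq]] l mu Wp WpMN What_m.
  change WpMN with (Wf Hp l mu) in What_m |- *.
  subst What_m.
  set (Y := I_mat l mu (Wf Hp l mu)).
  set (G := fun z => mmul (minv (Y z)) (Wf Hp l mu z)).
  assert (Hcone_det : forall w, Ucone alpha w -> mdet (Hp w) <> C0).
  { intros w Hw. apply Hdet. right. destruct (Ucone_Splus alpha beta w Ha ltac:(lra) Hw) as [Hn Hr].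
    split; auto; lra. }
  assert (HY : forall w, Ucone alpha w -> mdet (Y w) <> C0).
  { intros w Hw. apply detY. apply Hcone_det. apply Ucone_inv; auto. }
  assert (Hone : Ucone alpha Cone).
  { unfold Ucone, Defs.C1; cbn [fst snd]. rewrite Rabs_R0. pose proof (tan_gt_0 alpha (proj1 Ha) (proj2 Ha)). lra. }
  assert (Hconst : forall z, Ucone alpha z -> G z = G Cone).
  { intros z Hz.
    set (p := fun s => Cadd Cone (Cmul (RtoC s) (Csub z Cone))).
    assert (P1 : p 1 = z) by (unfold p; destruct z as [x y];
      unfold Cadd, Cmul, RtoC, Csub, Copp, Defs.C1; apply Cx_eq; simpl; ring).
    assert (P0 : p 0 = Cone) by (unfold p;
      unfold Cadd, Cmul, RtoC, Csub, Copp, Defs.C1; apply Cx_eq; simpl; ring).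
    rewrite <- P1, <- P0 at 1.
    change (G (p 1) = G (p 0)) with ((fun s => G (p s)) 1 = (fun s => G (p s)) 0).
    apply mconst. intros t Ht.
    assert (Hpt : Ucone alpha (p t)) by (apply Ucone_line; auto).
    assert (Hqt : Ucone alpha (Cinv (p t))) by (apply Ucone_inv; auto).
    assert (Sp : S_plus alpha beta (p t)) by (apply Ucone_Splus; auto; lra).
    assert (Sq : S_plus alpha beta (Cinv (p t))) by (apply Ucone_Splus; auto; lra).
    assert (Dp : cD p t (Csub z Cone)) by (apply cD_line).
    unfold G.
    apply (mD_G (fun s => Y (p s)) (fun s => Wf Hp l mu (p s)) t (Csub z Cone) (L_mat omega l mu (p t))).
    - unfold Y. apply (mD_Y omega l mu Hp H' (S_plus alpha beta)); auto; try lra; try apply Hpt; try apply Hqt.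
    - apply (mD_W omega l mu Hp H' (S_plus alpha beta)); auto. apply Hpt.
    - apply HY; auto. }
  set (Q := G Cone). exists Q.
  assert (Hrel : forall z, Ucone alpha z -> Wf Hp l mu z = mmul (Y z) Q).
  { intros z Hz. unfold Q. rewrite <- (Hconst z Hz). unfold G. symmetry; apply minv_r; auto. }
  split.
  - intros z Hs. apply Hrel. apply (Sigma1_cone alpha beta); auto; lra.
  - set (W1 := Wf Hp l mu Cone). set (K := mscal (Copp Ci) Jm).
    assert (HY1 : Y Cone = mmul K W1).
    { unfold Y. rewrite Y_form, Cinv_one, fexp_one. fold W1. unfold K. meq2; ring. }
    assert (KK : mmul K K = mId).
    { unfold K, Jm, mId; meq2; unfold Ci, Copp, Cmul, Cadd, C0, Defs.C1; apply Cx_eq; simpl; ring. }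
    assert (Hid : forall X, mmul mId X = X) by (intro X; unfold mId; meq2; ring).
    assert (R1 : W1 = mmul (mmul K W1) Q) by (rewrite <- HY1; apply Hrel; auto).
    assert (R2 : mmul K W1 = mmul W1 Q).
    { rewrite R1 at 1. rewrite <- !mmul_assoc, KK, Hid. reflexivity. }
    assert (R3 : W1 = mmul W1 (mmul Q Q)).
    { rewrite R1 at 1. rewrite R2, mmul_assoc. reflexivity. }
    assert (D1 : mdet W1 <> C0) by (apply detW; apply Hcone_det; auto).
    rewrite <- (Hid (mmul Q Q)), <- (minv_l W1 D1), mmul_assoc, <- R3. reflexivity.
Qed.
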